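(* For every integer $d \geq 1$ there exist a strictly increasing sequence $(a_n)_{n\geq1}$ of positive integers and a constant $c > 0$ such that $$\frac{a_{n+1}}{a_n} > 1 + \frac{c}{a_n^{1/d}} \qquad \text{for all } n \in \mathbb{N},$$ and such that for almost all $\alpha \in \mathbb{R}$ the discrepancy $D_N$ of $(\{a_n\alpha\})_{n\geq1}$ satisfies $N D_N = O\big((\log N)^{2+\varepsilon}\big)$ as $N\to\infty$, for every $\varepsilon > 0$.
   Context: For real $x$, $\{x\}$ denotes the fractional part of $x$. For a sequence $(x_n)_{n\ge1}$ in $[0,1)$, its discrepancy is $$D_N = \sup_{0 \leq a < b \leq 1} \left| \frac{A_N([a,b))}{N} - (b-a) \right|, \qquad A_N([a,b)) = \#\{1 \leq n \leq N : x_n \in [a,b)\}.$$ *)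

(* Defs.v *)
From Stdlib Require Import Reals Lra Lia.
Open Scope R_scope.

Fixpoint count_in (x : nat -> R) (a b : R) (N : nat) : nat :=
  match N with
  | O => O
  | S M => (count_in x a b M +
            (if Rle_dec a (x (S M)) then
               if Rlt_dec (x (S M)) b then 1 else 0
             else 0))%nat
  end.

Lemma count_in_le x a b N : (count_in x a b N <= N)%nat.
Proof.
  induction N as [|N IH]; simpl; [lia|].
  destruct (Rle_dec a (x (S N))); [destruct (Rlt_dec (x (S N)) b)|]; lia.
Qed.

Definition disc_set (x : nat -> R) (N : nat) (v : R) : Prop :=
  exists a b, 0 <= a < b /\ b <= 1 /\
    v = Rabs (INR (count_in x a b N) / INR N - (b - a)).

Lemma ratio_01 x a b N : 0 <= INR (count_in x a b N) / INR N <= 1.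
Proof.
  destruct N as [|N].
  - simpl. unfold Rdiv. rewrite Rmult_0_l. lra.
  - pose proof (count_in_le x a b (S N)) as H.
    apply le_INR in H. pose proof (pos_INR (count_in x a b (S N))).
    assert (0 < INR (S N)) by (apply lt_0_INR; lia).
    split.
    + unfold Rdiv; apply Rmult_le_pos; [lra| left; apply Rinv_0_lt_compat; lra].
    + apply (Rmult_le_reg_r (INR (S N))); [lra|].
      unfold Rdiv. rewrite Rmult_assoc, Rinv_l by lra. lra.
Qed.

Lemma disc_set_bound x N : bound (disc_set x N).
Proof.
  exists 1. intros v [a [b [Hab [Hb ->]]]].
  pose proof (ratio_01 x a b N). apply Rabs_le. lra.
Qed.

Lemma disc_set_ne x N : exists v, disc_set x N v.
Proof. exists (Rabs (INR (count_in x 0 1 N) / INR N - (1 - 0))), 0, 1. repeat split; lra. Qed.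

Definition discrepancy (x : nat -> R) (N : nat) : R :=
  proj1_sig (completeness (disc_set x N) (disc_set_bound x N) (disc_set_ne x N)).

(* Lebesgue-null subset of R: coverable by countably many intervals of
   arbitrarily small total length. *)
Definition null_set (S : R -> Prop) : Prop :=
  forall eps, 0 < eps ->
    exists l u : nat -> R,
      (forall k, l k <= u k) /\
      (forall y, S y -> exists k, l k <= y <= u k) /\
      (forall n, sum_f_R0 (fun k => u k - l k) n <= eps).

(* Main.v *)
Require Import Defs.
From Stdlib Require Import Reals Lra Lia ZArith List Permutation Classical IndefiniteDescription Cantor.
Import ListNotations.
Open Scope R_scope.

Definition Bk (j : nat) : nat := (2 ^ (2 ^ j - 1))%nat.
Definition tk (d j : nat) : nat := (Bk (S j) ^ (d - 1))%nat.
Definition blk (n : nat) : nat := Nat.log2 (Nat.log2 n + 1).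
Definition seqa (d n : nat) : nat := (tk d (blk n) * n)%nat.

Lemma Bk_pos j : (1 <= Bk j)%nat.
Proof. unfold Bk. pose proof (Nat.pow_nonzero 2 (2^j-1)). lia. Qed.

Lemma Bk_mono i j : (i <= j)%nat -> (Bk i <= Bk j)%nat.
Proof. intros H. unfold Bk. apply Nat.pow_le_mono_r; [lia|].
  pose proof (Nat.pow_le_mono_r 2 i j). lia. Qed.

Lemma tk_pos d j : (1 <= tk d j)%nat.
Proof. unfold tk. pose proof (Bk_pos (S j)).
  pose proof (Nat.pow_nonzero (Bk (S j)) (d-1)). lia. Qed.

Lemma tk_mono d i j : (i <= j)%nat -> (tk d i <= tk d j)%nat.
Proof. intros H. unfold tk. apply Nat.pow_le_mono_l. apply Bk_mono. lia. Qed.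

Lemma blk_spec n : (1 <= n)%nat -> (Bk (blk n) <= n < Bk (S (blk n)))%nat.
Proof.
  intros Hn. unfold blk, Bk.
  set (k := Nat.log2 n).
  destruct (Nat.log2_spec n) as [H1 H2]; [lia|].
  destruct (Nat.log2_spec (k+1)) as [H3 H4]; [lia|].
  set (j := Nat.log2 (k+1)) in *. fold k in H1, H2.
  rewrite Nat.pow_succ_r' in H4 |- *. clearbody k j.
  split.
  - eapply Nat.le_trans; [|apply H1]. apply Nat.pow_le_mono_r; lia.
  - eapply Nat.lt_le_trans; [apply H2|].
    apply Nat.pow_le_mono_r; lia.
Qed.

Lemma blk_mono n m : (n <= m)%nat -> (blk n <= blk m)%nat.
Proof. intros H. unfold blk. apply Nat.log2_le_mono.
  pose proof (Nat.log2_le_mono n m H). lia. Qed.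

Lemma seqa_step d n : (seqa d n + tk d (blk n) <= seqa d (S n))%nat.
Proof.
  unfold seqa. pose proof (tk_mono d (blk n) (blk (S n)) (blk_mono n (S n) ltac:(lia))).
  pose proof (Nat.mul_le_mono_r _ _ (S n) H). lia.
Qed.

Lemma seqa_pos d n : (1 <= n)%nat -> (0 < seqa d n)%nat.
Proof. intros. unfold seqa. pose proof (tk_pos d (blk n)). nia. Qed.

Lemma seqa_ge d n : (1 <= d)%nat -> (1 <= n)%nat -> (n ^ d <= seqa d n)%nat.
Proof.
  intros Hd Hn. unfold seqa, tk.
  destruct (blk_spec n Hn) as [_ H].
  replace d with (S (d-1)) at 1 by lia. rewrite Nat.pow_succ_r'.
  rewrite (Nat.mul_comm n). apply Nat.mul_le_mono_r.
  apply Nat.pow_le_mono_l. lia.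
Qed.

Lemma growth d n : (1 <= d)%nat -> (1 <= n)%nat ->
  INR (seqa d (S n)) / INR (seqa d n) > 1 + (1/2) / Rpower (INR (seqa d n)) (1 / INR d).
Proof.
  intros Hd Hn.
  set (A := seqa d n). set (t := tk d (blk n)).
  assert (HA : (0 < A)%nat) by (apply seqa_pos; lia).
  assert (HAr : 0 < INR A) by (apply lt_0_INR; lia).
  assert (Hst := seqa_step d n). fold A t in Hst.
  assert (Ht : 1 <= INR t) by (apply (le_INR 1); apply tk_pos).
  set (x := Rpower (INR A) (1 / INR d)).
  assert (Hdr : 1 <= INR d) by (apply (le_INR 1); lia).
  assert (Hx : INR n <= x).
  { unfold x.
    assert (Hge := seqa_ge d n Hd Hn). fold A in Hge.
    apply le_INR in Hge. rewrite pow_INR in Hge.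
    assert (Hnr : 0 < INR n) by (apply lt_0_INR; lia).
    replace (INR n) with (Rpower (INR n ^ d) (1 / INR d)).
    2:{ rewrite <- Rpower_pow by lra. rewrite Rpower_mult.
        replace (INR d * (1 / INR d)) with 1 by (field; lra). apply Rpower_1; lra. }
    apply Rle_Rpower_l; [unfold Rdiv; apply Rmult_le_pos; [lra| left; apply Rinv_0_lt_compat; lra]|].
    split; [apply pow_lt; lra| exact Hge]. }
  assert (HxA : A = (t * n)%nat) by reflexivity.
  assert (Hxp : 0 < x) by (unfold x, Rpower; apply exp_pos).
  apply le_INR in Hst. rewrite plus_INR in Hst.
  apply Rlt_gt.
  apply Rlt_le_trans with (1 + INR t / INR A).
  - apply Rplus_lt_compat_l.
    rewrite HxA, mult_INR.
    assert (Hnr : 1 <= INR n) by (apply (le_INR 1); lia).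
    apply (Rmult_lt_reg_r (x * (INR t * INR n))).
    { apply Rmult_lt_0_compat; nra. }
    field_simplify; try nra.
  - apply (Rmult_le_reg_r (INR A)); [lra|].
    unfold Rdiv. rewrite Rmult_assoc, Rinv_l by lra.
    rewrite Rmult_plus_distr_r, Rmult_assoc, Rinv_l by lra. lra.
Qed.

Definition rsum (f : nat -> R) (l : list nat) : R := fold_right (fun i acc => f i + acc) 0 l.

Lemma rsum_app f l1 l2 : rsum f (l1 ++ l2) = rsum f l1 + rsum f l2.
Proof. induction l1; simpl; [lra|]. rewrite IHl1; lra. Qed.

Lemma rsum_ext f g l : (forall i, In i l -> f i = g i) -> rsum f l = rsum g l.
Proof. induction l; simpl; intros H; [lra|]. rewrite H by auto. rewrite IHl; auto. Qed.

Lemma rsum_le f g l : (forall i, In i l -> f i <= g i) -> rsum f l <= rsum g l.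
Proof. induction l; simpl; intros H; [lra|]. pose proof (H a (or_introl eq_refl)).
  pose proof (IHl (fun i Hi => H i (or_intror Hi))). lra. Qed.

Lemma rsum_plus f g l : rsum (fun i => f i + g i) l = rsum f l + rsum g l.
Proof. induction l; simpl; [lra|]. rewrite IHl; lra. Qed.

Lemma rsum_minus f g l : rsum (fun i => f i - g i) l = rsum f l - rsum g l.
Proof. induction l; simpl; [lra|]. rewrite IHl; lra. Qed.

Lemma rsum_const c l : rsum (fun _ => c) l = INR (length l) * c.
Proof. induction l; simpl length; simpl rsum; [simpl; lra|]. rewrite IHl, S_INR; lra. Qed.

Lemma rsum_perm f l1 l2 : Permutation l1 l2 -> rsum f l1 = rsum f l2.
Proof. induction 1; simpl; lra. Qed.

Definition ind (y c : R) : R := if Rlt_dec y c then 1 else 0.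

Lemma ind_01 y c : 0 <= ind y c <= 1.
Proof. unfold ind; destruct Rlt_dec; lra. Qed.

Definition cntR (x : nat -> R) (c : R) (s N : nat) : R := rsum (fun n => ind (x n) c) (seq (S s) N).

Lemma cntR_add x c s N1 N2 : cntR x c s (N1 + N2) = cntR x c s N1 + cntR x c (s + N1) N2.
Proof. unfold cntR. rewrite seq_app, rsum_app. reflexivity. Qed.

Lemma rsum_01 f l : (forall i, 0 <= f i <= 1) -> 0 <= rsum f l <= INR (length l).
Proof. intros H. induction l; simpl rsum; simpl length; [simpl; lra|].
  rewrite S_INR. pose proof (H a). lra. Qed.

Lemma cntR_bounds x c s N : 0 <= cntR x c s N <= INR N.
Proof.
  unfold cntR. pose proof (rsum_01 (fun n => ind (x n) c) (seq (S s) N) (fun i => ind_01 _ _)) as H.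
  rewrite length_seq in H. exact H.
Qed.

Lemma cntR_ext x y c s N : (forall r, (1 <= r <= N)%nat -> x (s + r)%nat = y (s + r)%nat) ->
  cntR x c s N = cntR y c s N.
Proof. intros H. unfold cntR. apply rsum_ext. intros i Hi. apply in_seq in Hi.
  replace i with (s + (i - s))%nat by lia. rewrite H by lia. reflexivity. Qed.

Lemma cntR_1 x c s : cntR x c s 1 = ind (x (S s)) c.
Proof. unfold cntR. simpl. lra. Qed.

Lemma count_in_cntR x a b N : a <= b ->
  INR (count_in x a b N) = cntR x b 0 N - cntR x a 0 N.
Proof.
  intros Hab. induction N.
  - unfold cntR; simpl; lra.
  - replace (S N) with (N + 1)%nat at 2 3 by lia. rewrite !cntR_add, !cntR_1.
    simpl count_in. rewrite plus_INR, IHN. simpl (0 + N)%nat. unfold ind.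
    destruct (Rle_dec a (x (S N))); [destruct (Rlt_dec (x (S N)) b)|];
    destruct (Rlt_dec (x (S N)) b); destruct (Rlt_dec (x (S N)) a); simpl; lra.
Qed.

Lemma Int_part_shift (x : R) (z : Z) : Int_part (x + IZR z) = (Int_part x + z)%Z.
Proof. symmetry. apply Int_part_spec. pose proof (base_Int_part x). rewrite plus_IZR. lra. Qed.

Lemma ind_floor y c : 0 <= c <= 1 -> ind (frac_part y) c = IZR (Int_part y - Int_part (y - c)).
Proof.
  intros Hc. unfold ind, frac_part. pose proof (base_Int_part y) as [H1 H2].
  destruct Rlt_dec.
  - replace (Int_part (y - c)) with (Int_part y - 1)%Z.
    + replace (Int_part y - (Int_part y - 1))%Z with 1%Z by ring. reflexivity.
    + apply Int_part_spec. rewrite minus_IZR. simpl. lra.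
  - replace (Int_part (y - c)) with (Int_part y)%Z.
    + rewrite Z.sub_diag. reflexivity.
    + apply Int_part_spec. lra.
Qed.

Lemma count_ge q L : rsum (fun i => if le_dec L i then 1 else 0) (seq 0 q) = INR (q - L).
Proof.
  induction q.
  - simpl. reflexivity.
  - rewrite seq_S, rsum_app, IHq. unfold rsum. simpl fold_right. destruct (le_dec L q).
    + replace (S q - L)%nat with (S (q - L)) by lia. rewrite S_INR. lra.
    + replace (S q - L)%nat with (q - L)%nat by lia. lra.
Qed.

Lemma hermite (x : R) (q : nat) : (1 <= q)%nat ->
  rsum (fun i => IZR (Int_part (x + INR i / INR q))) (seq 0 q) = IZR (Int_part (INR q * x)).
Proof.
  intros Hq.
  assert (Hqr : 1 <= INR q) by (apply (le_INR 1); lia).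
  set (k := Int_part x). set (f := frac_part x).
  assert (Hx : x = IZR k + f) by (unfold f, k, frac_part; lra).
  assert (Hf := base_fp x). fold f in Hf.
  set (mz := Int_part (INR q * f)).
  assert (Hm := base_Int_part (INR q * f)). fold mz in Hm.
  assert (Hmz : (0 <= mz < Z.of_nat q)%Z).
  { destruct Hm as [Hm1 Hm2]. split.
    - assert (-1 < mz)%Z; [|lia]. apply lt_IZR. simpl. nra.
    - apply lt_IZR. rewrite <- INR_IZR_INZ. nra. }
  set (m := Z.to_nat mz).
  assert (Hmm : IZR mz = INR m) by (unfold m; rewrite INR_IZR_INZ, Z2Nat.id by (destruct Hmz; assumption); reflexivity).
  rewrite Hmm in Hm.
  assert (Hmq : (m < q)%nat) by (unfold m; lia).
  transitivity (rsum (fun i => IZR k + (if le_dec (q - m) i then 1 else 0)) (seq 0 q)).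
  - apply rsum_ext. intros i Hi. apply in_seq in Hi.
    assert (Hir : INR i < INR q) by (apply lt_INR; lia).
    assert (Hi0 : 0 <= INR i) by apply pos_INR.
    destruct (le_dec (q - m) i) as [Hle|Hle];
    [replace (IZR k + 1) with (IZR (k + 1)) by (rewrite plus_IZR; reflexivity)
    |replace (IZR k + 0) with (IZR k) by ring];
    f_equal; symmetry; apply Int_part_spec; rewrite ?plus_IZR; simpl.
    + apply le_INR in Hle. rewrite minus_INR in Hle by lia.
      assert (f + INR i / INR q >= 1).
      { apply Rle_ge. apply (Rmult_le_reg_r (INR q)); [lra|].
        rewrite Rmult_plus_distr_r. unfold Rdiv. rewrite Rmult_assoc, Rinv_l by lra. lra. }
      assert (f + INR i / INR q < 2).
      { assert (INR i / INR q < 1). { apply (Rmult_lt_reg_r (INR q)); [lra|].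
        unfold Rdiv. rewrite Rmult_assoc, Rinv_l by lra. lra. } lra. }
      rewrite Hx. lra.
    + assert (Hlt : (i + m + 1 <= q)%nat) by lia. apply le_INR in Hlt.
      rewrite !plus_INR in Hlt. simpl in Hlt.
      assert (f + INR i / INR q < 1).
      { apply (Rmult_lt_reg_r (INR q)); [lra|].
        rewrite Rmult_plus_distr_r. unfold Rdiv. rewrite Rmult_assoc, Rinv_l by lra. lra. }
      assert (0 <= INR i / INR q) by (unfold Rdiv; apply Rmult_le_pos; [lra|left; apply Rinv_0_lt_compat; lra]).
      rewrite Hx. lra.
  - rewrite rsum_plus, rsum_const, count_ge, length_seq.
    replace (q - (q - m))%nat with m by lia.
    rewrite Hx, Rmult_plus_distr_l.
    replace (INR q * IZR k) with (IZR (Z.of_nat q * k)) by (rewrite mult_IZR, <- INR_IZR_INZ; reflexivity).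
    rewrite (Rplus_comm (IZR _) (INR q * f)), Int_part_shift. fold mz. rewrite plus_IZR, mult_IZR, <- INR_IZR_INZ, Hmm. lra.
Qed.

Definition Sg (phi : R) (q : nat) (c : R) : R :=
  rsum (fun i => ind (frac_part (phi + INR i / INR q)) c) (seq 0 q).

Lemma Int_part_diff A B : B - 1 < IZR (Int_part A) - IZR (Int_part (A - B)) < B + 1.
Proof. pose proof (base_Int_part A). pose proof (base_Int_part (A - B)). lra. Qed.

Lemma Sg_01 phi q c : (1 <= q)%nat -> 0 <= c <= 1 ->
  INR q * c - 1 < Sg phi q c < INR q * c + 1.
Proof.
  intros Hq Hc. unfold Sg.
  rewrite (rsum_ext _ (fun i => IZR (Int_part (phi + INR i / INR q)) -
                                IZR (Int_part ((phi - c) + INR i / INR q)))).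
  2:{ intros i _. rewrite ind_floor by lra. rewrite minus_IZR. do 3 f_equal. ring. }
  rewrite rsum_minus, !hermite by lia.
  replace (INR q * (phi - c)) with (INR q * phi - INR q * c) by ring.
  apply Int_part_diff.
Qed.

Lemma Sg_nonneg phi q c : 0 <= Sg phi q c <= INR q.
Proof. unfold Sg. pose proof (rsum_01 (fun i => ind (frac_part (phi + INR i / INR q)) c) (seq 0 q)
  (fun i => ind_01 _ _)). rewrite length_seq in H. exact H. Qed.

Lemma Sg_lo phi q c : (1 <= q)%nat -> c <= 1 -> INR q * c - 1 <= Sg phi q c.
Proof.
  intros Hq Hc. destruct (Rle_lt_dec 0 c).
  - pose proof (Sg_01 phi q c Hq (conj r Hc)). lra.
  - pose proof (Sg_nonneg phi q c). pose proof (pos_INR q). nra.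
Qed.

Lemma Sg_hi phi q c : (1 <= q)%nat -> 0 <= c -> Sg phi q c <= INR q * c + 1.
Proof.
  intros Hq Hc. destruct (Rle_lt_dec c 1).
  - pose proof (Sg_01 phi q c Hq (conj Hc r)). lra.
  - pose proof (Sg_nonneg phi q c). pose proof (pos_INR q). nra.
Qed.

Definition resid (p : Z) (q n : nat) : nat := Z.to_nat ((Z.of_nat n * p) mod Z.of_nat q).

Lemma resid_perm p q : (1 <= q)%nat -> Z.gcd p (Z.of_nat q) = 1%Z ->
  Permutation (map (resid p q) (seq 1 q)) (seq 0 q).
Proof.
  intros Hq Hg. apply NoDup_Permutation_bis.
  - apply FinFun.Injective_map_NoDup_in; [|apply seq_NoDup].
    intros x y Hx Hy Hxy. apply in_seq in Hx, Hy. unfold resid in Hxy.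
    assert (H0 : (0 < Z.of_nat q)%Z) by lia.
    pose proof (Z.mod_pos_bound (Z.of_nat x * p) _ H0).
    pose proof (Z.mod_pos_bound (Z.of_nat y * p) _ H0).
    apply Z2Nat.inj in Hxy; try lia.
    assert (Hd : (Z.of_nat q | (Z.of_nat x - Z.of_nat y) * p)%Z).
    { rewrite Z.mul_sub_distr_r. apply Z.mod_divide; [lia|].
      rewrite Zminus_mod, Hxy, Z.sub_diag. reflexivity. }
    rewrite Z.mul_comm in Hd. apply Z.gauss in Hd.
    2:{ rewrite Z.gcd_comm. exact Hg. }
    destruct Hd as [k Hk].
    destruct (Z.eq_dec k 0) as [->|Hk0]; [lia|].
    assert (Z.abs (Z.of_nat x - Z.of_nat y) >= Z.of_nat q)%Z by (rewrite Hk, Z.abs_mul; nia).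
    lia.
  - rewrite !length_map, !length_seq. lia.
  - intros z Hz. apply in_map_iff in Hz. destruct Hz as [n [<- Hn]].
    apply in_seq. unfold resid.
    assert (H0 : (0 < Z.of_nat q)%Z) by lia.
    pose proof (Z.mod_pos_bound (Z.of_nat n * p) _ H0). lia.
Qed.

Lemma rsum_map f g l : rsum f (map g l) = rsum (fun n => f (g n)) l.
Proof. induction l; simpl; [lra|]. rewrite IHl. reflexivity. Qed.

Lemma frac_resid phi p q n : (1 <= q)%nat ->
  frac_part (phi + INR n * (IZR p / INR q)) = frac_part (phi + INR (resid p q n) / INR q).
Proof.
  intros Hq. unfold resid.
  assert (H0 : (0 < Z.of_nat q)%Z) by lia.
  pose proof (Z.mod_pos_bound (Z.of_nat n * p) _ H0).
  pose proof (Z.div_mod (Z.of_nat n * p) (Z.of_nat q) ltac:(lia)) as Hdm.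
  set (m := ((Z.of_nat n * p) mod Z.of_nat q)%Z) in *.
  set (dv := ((Z.of_nat n * p) / Z.of_nat q)%Z) in *.
  assert (Hqr : 0 < INR q) by (apply lt_0_INR; lia).
  assert (E : phi + INR n * (IZR p / INR q) = (phi + INR (Z.to_nat m) / INR q) + IZR dv).
  { assert (Hm : INR (Z.to_nat m) = IZR m) by (rewrite INR_IZR_INZ, Z2Nat.id by lia; reflexivity).
    rewrite Hm. rewrite !INR_IZR_INZ.
    assert (Hq' : IZR (Z.of_nat q) <> 0) by (apply not_0_IZR; lia).
    assert (Hr : IZR (Z.of_nat n) * IZR p = IZR (Z.of_nat q) * IZR dv + IZR m)
      by (rewrite <- !mult_IZR, <- plus_IZR; f_equal; lia).
    replace (IZR (Z.of_nat n) * (IZR p / IZR (Z.of_nat q)))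
      with ((IZR (Z.of_nat n) * IZR p) / IZR (Z.of_nat q)) by (field; exact Hq').
    rewrite Hr. field. exact Hq'. }
  rewrite E. unfold frac_part. rewrite Int_part_shift, plus_IZR. ring.
Qed.

Lemma frac_of y (z : Z) : IZR z <= y < IZR z + 1 -> frac_part y = y - IZR z.
Proof. intros H. unfold frac_part. f_equal. f_equal. symmetry. apply Int_part_spec. lra. Qed.

Lemma frac_frac_add x e : frac_part (x + e) = frac_part (frac_part x + e).
Proof.
  assert (E : frac_part x + e = (x + e) + IZR (- Int_part x)) by (unfold frac_part; rewrite opp_IZR; ring).
  rewrite E. unfold frac_part. rewrite Int_part_shift, plus_IZR, opp_IZR. ring.
Qed.

Lemma sandwich g e c h : 0 <= g < 1 -> Rabs e < h -> h <= 1 -> 0 <= c <= 1 ->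
  ind g (c - h) - ind g h <= ind (frac_part (g + e)) c <= ind g (c + h) + 1 - ind g (1 - h).
Proof.
  intros Hg He Hh Hc. apply Rabs_def2 in He.
  assert (F : (0 <= g + e < 1 /\ frac_part (g + e) = g + e) \/
              (1 <= g + e /\ frac_part (g + e) = g + e - 1) \/
              (g + e < 0 /\ frac_part (g + e) = g + e + 1)).
  { destruct (Rlt_le_dec (g + e) 0).
    - right; right. split; auto. rewrite (frac_of _ (-1)); simpl; [ring|lra].
    - destruct (Rlt_le_dec (g + e) 1).
      + left. split; [lra|]. rewrite (frac_of _ 0); simpl; [ring|lra].
      + right; left. split; auto. rewrite (frac_of _ 1); simpl; [ring|lra]. }
  unfold ind.
  destruct F as [[F1 F2]|[[F1 F2]|[F1 F2]]]; rewrite F2;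
  repeat destruct Rlt_dec; lra.
Qed.

Lemma block phi beta q p c : (1 <= q)%nat -> Z.gcd p (Z.of_nat q) = 1%Z ->
  Rabs (INR q * beta - IZR p) < 1 / INR q -> 0 <= c <= 1 ->
  Rabs (cntR (fun n => frac_part (phi + INR n * beta)) c 0 q - INR q * c) <= 4.
Proof.
  intros Hq Hg Hb Hc.
  assert (Hqr : 1 <= INR q) by (apply (le_INR 1); lia).
  set (h := 1 / INR q).
  assert (Hh : 0 < h <= 1).
  { unfold h. split. apply Rdiv_lt_0_compat; lra.
    apply (Rmult_le_reg_r (INR q)); [lra|]. unfold Rdiv. rewrite Rmult_assoc, Rinv_l; lra. }
  assert (Hqh : INR q * h = 1) by (unfold h; field; lra).
  set (g := fun i : nat => frac_part (phi + INR i / INR q)).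
  set (L := fun i => ind (g i) (c - h) - ind (g i) h).
  set (U := fun i => ind (g i) (c + h) + 1 - ind (g i) (1 - h)).
  assert (Hpt : forall n, In n (seq 1 q) ->
     L (resid p q n) <= ind (frac_part (phi + INR n * beta)) c <= U (resid p q n)).
  { intros n Hn. apply in_seq in Hn.
    set (e := INR n * (beta - IZR p / INR q)).
    assert (E : phi + INR n * beta = (phi + INR n * (IZR p / INR q)) + e) by (unfold e; ring).
    rewrite E, frac_frac_add, frac_resid by lia.
    unfold L, U. apply sandwich; try lra.
    - unfold g. pose proof (base_fp (phi + INR (resid p q n) / INR q)). lra.
    - unfold e. rewrite Rabs_mult, Rabs_right by (apply Rle_ge, pos_INR).
      assert (Hn' : INR n <= INR q) by (apply le_INR; lia).
      assert (Hd : Rabs (beta - IZR p / INR q) = Rabs (INR q * beta - IZR p) / INR q).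
      { replace (beta - IZR p / INR q) with ((INR q * beta - IZR p) / INR q) by (field; lra).
        unfold Rdiv. rewrite Rabs_mult, (Rabs_right (/ INR q)); [reflexivity|].
        apply Rle_ge; left; apply Rinv_0_lt_compat; lra. }
      rewrite Hd. pose proof (Rabs_pos (INR q * beta - IZR p)).
      apply Rle_lt_trans with (INR q * (Rabs (INR q * beta - IZR p) / INR q)).
      + apply Rmult_le_compat_r; [|lra]. unfold Rdiv. apply Rmult_le_pos; [lra|].
        left; apply Rinv_0_lt_compat; lra.
      + replace (INR q * (Rabs (INR q * beta - IZR p) / INR q)) with (Rabs (INR q * beta - IZR p))
          by (field; lra). exact Hb. }
  assert (Hperm := resid_perm p q Hq Hg).
  assert (SL : rsum (fun n => L (resid p q n)) (seq 1 q) = Sg phi q (c - h) - Sg phi q h).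
  { rewrite <- rsum_map, (rsum_perm _ _ _ Hperm). unfold L, Sg. rewrite rsum_minus. reflexivity. }
  assert (SU : rsum (fun n => U (resid p q n)) (seq 1 q) = Sg phi q (c + h) + INR q - Sg phi q (1 - h)).
  { rewrite <- rsum_map, (rsum_perm _ _ _ Hperm). unfold U, Sg.
    rewrite rsum_minus, rsum_plus, rsum_const, length_seq. unfold g. rewrite Rmult_1_r. reflexivity. }
  assert (Hlo := rsum_le _ _ _ (fun n Hn => proj1 (Hpt n Hn))).
  assert (Hhi := rsum_le _ _ _ (fun n Hn => proj2 (Hpt n Hn))).
  rewrite SL in Hlo. rewrite SU in Hhi.
  pose proof (Sg_lo phi q (c - h) Hq ltac:(lra)).
  pose proof (Sg_hi phi q h Hq ltac:(lra)).
  pose proof (Sg_hi phi q (c + h) Hq ltac:(lra)).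
  pose proof (Sg_lo phi q (1 - h) Hq ltac:(lra)).
  unfold cntR. apply Rabs_le. split; nra.
Qed.

Lemma dirichlet0 beta N : (1 <= N)%nat -> exists (q : nat) (p : Z),
  (1 <= q <= N)%nat /\ Rabs (INR q * beta - IZR p) < 1 / INR N.
Proof.
  intros HN.
  assert (HNr : 1 <= INR N) by (apply (le_INR 1); lia).
  set (box := fun k : nat => Z.to_nat (Int_part (INR N * frac_part (INR k * beta)))).
  assert (Hbox : forall k, (0 <= Int_part (INR N * frac_part (INR k * beta)) < Z.of_nat N)%Z).
  { intros k. pose proof (base_fp (INR k * beta)) as [F1 F2].
    pose proof (base_Int_part (INR N * frac_part (INR k * beta))) as [I1 I2]. split.
    - assert (-1 < Int_part (INR N * frac_part (INR k * beta)))%Z; [|lia].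
      apply lt_IZR. simpl. nra.
    - apply lt_IZR. rewrite <- INR_IZR_INZ. nra. }
  assert (Hex : exists k1 k2, (k1 < k2 <= N)%nat /\ box k1 = box k2).
  { apply NNPP. intros Hno.
    assert (Hnd : NoDup (map box (seq 0 (S N)))).
    { apply FinFun.Injective_map_NoDup_in; [|apply seq_NoDup].
      intros x y Hx Hy Hxy. apply in_seq in Hx, Hy.
      destruct (Nat.lt_total x y) as [H|[H|H]]; auto; exfalso; apply Hno.
      - exists x, y. split; [lia|auto].
      - exists y, x. split; [lia|auto]. }
    assert (Hinc : incl (map box (seq 0 (S N))) (seq 0 N)).
    { intros z Hz. apply in_map_iff in Hz. destruct Hz as [k [<- _]].
      apply in_seq. unfold box. pose proof (Hbox k). lia. }
    pose proof (NoDup_incl_length Hnd Hinc). rewrite length_map, !length_seq in H. lia. }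
  destruct Hex as [k1 [k2 [Hk Hb]]].
  exists (k2 - k1)%nat, (Int_part (INR k2 * beta) - Int_part (INR k1 * beta))%Z.
  split; [lia|].
  unfold box in Hb. pose proof (Hbox k1). pose proof (Hbox k2).
  apply Z2Nat.inj in Hb; try lia.
  pose proof (base_Int_part (INR N * frac_part (INR k1 * beta))) as [A1 A2].
  pose proof (base_Int_part (INR N * frac_part (INR k2 * beta))) as [B1 B2].
  rewrite Hb in A1, A2.
  assert (E : INR (k2 - k1) * beta - IZR (Int_part (INR k2 * beta) - Int_part (INR k1 * beta))
             = frac_part (INR k2 * beta) - frac_part (INR k1 * beta)).
  { rewrite minus_INR by lia. rewrite minus_IZR. unfold frac_part. ring. }
  rewrite E. apply Rabs_def1.
  - apply (Rmult_lt_reg_l (INR N)); [lra|]. replace (INR N * (1 / INR N)) with 1 by (field; lra). lra.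
  - apply (Rmult_lt_reg_l (INR N)); [lra|]. replace (INR N * - (1 / INR N)) with (-1) by (field; lra). lra.
Qed.

Lemma dirichlet beta N : (1 <= N)%nat -> exists (q : nat) (p : Z),
  (1 <= q <= N)%nat /\ Z.gcd p (Z.of_nat q) = 1%Z /\ Rabs (INR q * beta - IZR p) < 1 / INR N.
Proof.
  intros HN. destruct (dirichlet0 beta N HN) as [q0 [p0 [Hq0 Hb]]].
  set (g := Z.gcd p0 (Z.of_nat q0)).
  assert (Hg0 : (0 < g)%Z).
  { pose proof (Z.gcd_nonneg p0 (Z.of_nat q0)). fold g in H.
    destruct (Z.eq_dec g 0) as [E|]; [|lia]. apply Z.gcd_eq_0 in E. lia. }
  assert (Hgq : (g | Z.of_nat q0)%Z) by apply Z.gcd_divide_r.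
  assert (Hgp : (g | p0)%Z) by apply Z.gcd_divide_l.
  destruct Hgq as [qq Hqq]. destruct Hgp as [pp Hpp].
  assert (Hqq0 : (1 <= qq)%Z) by nia.
  exists (Z.to_nat qq), pp. split; [|split].
  - split; [lia|]. nia.
  - rewrite Z2Nat.id by lia.
    pose proof (Z.gcd_div_gcd p0 (Z.of_nat q0) g ltac:(lia) eq_refl).
    rewrite Hpp, Hqq in H.
    rewrite !Z.div_mul in H by lia. exact H.
  - assert (E : INR (Z.to_nat qq) * beta - IZR pp = (INR q0 * beta - IZR p0) / IZR g).
    { rewrite INR_IZR_INZ, Z2Nat.id by lia. rewrite INR_IZR_INZ, Hqq, Hpp, !mult_IZR.
      field. apply not_0_IZR; lia. }
    rewrite E. unfold Rdiv at 1. rewrite Rabs_mult, (Rabs_right (/ IZR g)).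
    2:{ apply Rle_ge; left; apply Rinv_0_lt_compat, IZR_lt; lia. }
    assert (1 <= IZR g) by (apply IZR_le; lia).
    assert (0 < / IZR g <= 1).
    { split. apply Rinv_0_lt_compat; lra. rewrite <- Rinv_1. apply Rinv_le_contravar; lra. }
    pose proof (Rabs_pos (INR q0 * beta - IZR p0)). nra.
Qed.

Definition kx (beta phi : R) : nat -> R := fun n => frac_part (phi + INR n * beta).

Lemma cntR_shift beta phi c s N : cntR (kx beta phi) c s N = cntR (kx beta (phi + INR s * beta)) c 0 N.
Proof. unfold cntR.
  replace (seq (S s) N) with (map (fun n => s + n)%nat (seq 1 N)).
  2:{ clear. revert s. induction N as [|N IH]; intros s; [reflexivity|].
      rewrite !seq_S, map_app, IH. simpl. f_equal. f_equal. f_equal. lia. }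
  rewrite rsum_map. apply rsum_ext. intros i _. unfold kx. rewrite plus_INR.
  f_equal. f_equal. ring.
Qed.

Lemma multiblock beta q p c : (1 <= q)%nat -> Z.gcd p (Z.of_nat q) = 1%Z ->
  Rabs (INR q * beta - IZR p) < 1 / INR q -> 0 <= c <= 1 ->
  forall m phi, Rabs (cntR (kx beta phi) c 0 (m * q) - INR (m * q) * c) <= 4 * INR m.
Proof.
  intros Hq Hg Hb Hc m. induction m as [|m IH]; intros phi.
  - simpl. unfold cntR. simpl. rewrite Rmult_0_l, Rminus_0_r, Rabs_R0. lra.
  - replace (S m * q)%nat with (q + m * q)%nat by lia.
    rewrite cntR_add, (cntR_shift beta phi c (0 + q) (m * q)). replace (INR (0 + q)) with (INR q) by (f_equal; lia). rewrite plus_INR, S_INR. simpl (0 + q)%nat.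
    pose proof (block phi beta q p c Hq Hg Hb Hc) as H1. change (fun n => frac_part (phi + INR n * beta)) with (kx beta phi) in H1.
    specialize (IH (phi + INR q * beta)).
    replace (cntR (kx beta phi) c 0 q + cntR (kx beta (phi + INR q * beta)) c 0 (m * q) - (INR q + INR (m * q)) * c)
      with ((cntR (kx beta phi) c 0 q - INR q * c) + (cntR (kx beta (phi + INR q * beta)) c 0 (m * q) - INR (m * q) * c)) by ring.
    eapply Rle_trans; [apply Rabs_triang|]. lra.
Qed.

Lemma kron beta w c Nmax : 0 < w ->
  (forall q, (1 <= q <= Nmax)%nat -> forall z : Z, Rabs (INR q * beta - IZR z) >= 1 / (INR q * w)) ->
  0 <= c <= 1 ->
  forall K N phi, (N < 2 ^ K)%nat -> (N <= Nmax)%nat ->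
  Rabs (cntR (kx beta phi) c 0 N - INR N * c) <= 4 * w * INR K.
Proof.
  intros Hw Hgood Hc K. induction K as [|K IH]; intros N phi HN HNm.
  - simpl in HN. replace N with 0%nat by lia. unfold cntR. simpl.
    rewrite Rmult_0_l, Rminus_0_r, Rabs_R0. lra.
  - destruct (Nat.eq_dec N 0) as [->|HN0].
    { unfold cntR. simpl rsum. rewrite Rmult_0_l, Rminus_0_r, Rabs_R0. pose proof (pos_INR (S K)). nra. }
    destruct (dirichlet beta N ltac:(lia)) as [q [p [Hq [Hg Hb]]]].
    assert (HNr : 1 <= INR N) by (apply (le_INR 1); lia).
    assert (Hqr : 1 <= INR q) by (apply (le_INR 1); lia).
    assert (HqN : INR q <= INR N) by (apply le_INR; lia).
    assert (Hb' : Rabs (INR q * beta - IZR p) < 1 / INR q).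
    { eapply Rlt_le_trans; [exact Hb|]. unfold Rdiv. rewrite !Rmult_1_l.
      apply Rinv_le_contravar; lra. }
    pose proof (Hgood q ltac:(lia) p) as Hgq.
    assert (HNqw : INR N < INR q * w).
    { assert (1 / (INR q * w) < 1 / INR N) by lra.
      unfold Rdiv in H. rewrite !Rmult_1_l in H.
      destruct (Rlt_le_dec (INR N) (INR q * w)) as [|Hc']; auto.
      apply Rinv_le_contravar in Hc'; [lra|]. apply Rmult_lt_0_compat; lra. }
    set (m := (N / q)%nat). set (r := (N mod q)%nat).
    assert (Hdm : N = (m * q + r)%nat) by (unfold m, r; rewrite Nat.mul_comm; apply Nat.div_mod; lia).
    assert (Hr : (r < q)%nat) by (unfold r; apply Nat.mod_upper_bound; lia).
    assert (Hm1 : (1 <= m)%nat) by (unfold m; apply Nat.div_le_lower_bound; lia).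
    assert (Hmw : INR m <= w).
    { assert (INR (m * q) <= INR N) by (apply le_INR; lia). rewrite mult_INR in H.
      assert (INR m * INR q < w * INR q) by lra.
      apply Rmult_lt_reg_r in H0; lra. }
    assert (Hr2 : (r < 2 ^ K)%nat).
    { assert (m * q >= q)%nat by nia. rewrite Nat.pow_succ_r' in HN. lia. }
    rewrite Hdm, cntR_add, (cntR_shift beta phi c (0 + m * q) r). replace (INR (0 + m * q)) with (INR (m * q)) by (f_equal; lia). rewrite (plus_INR (m * q) r). simpl (0 + m * q)%nat.
    pose proof (multiblock beta q p c ltac:(lia) Hg Hb' Hc m phi) as H1.
    specialize (IH r (phi + INR (m * q) * beta) Hr2 ltac:(lia)).
    replace (cntR (kx beta phi) c 0 (m * q) + cntR (kx beta (phi + INR (m * q) * beta)) c 0 r - (INR (m * q) + INR r) * c)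
      with ((cntR (kx beta phi) c 0 (m * q) - INR (m * q) * c) + (cntR (kx beta (phi + INR (m * q) * beta)) c 0 r - INR r * c)) by ring.
    eapply Rle_trans; [apply Rabs_triang|]. rewrite S_INR. lra.
Qed.

Definition wj (j : nat) : R := INR ((j + 1) ^ 2 * 2 ^ (j + 2)).
Definition Kj (j : nat) : nat := (2 ^ (j + 1))%nat.
Definition Ftot (T J : nat) : R := INR (Bk T) + 4 * wj J * INR (Kj J) * INR (J + 1).

Definition good (d : nat) (alpha : R) (j : nat) : Prop :=
  forall q, (1 <= q <= Bk (S j))%nat -> forall z : Z,
    Rabs (INR q * (INR (tk d j) * alpha) - IZR z) >= 1 / (INR q * wj j).

Definition xs (d : nat) (alpha : R) : nat -> R := fun n => frac_part (INR (seqa d n) * alpha).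

Lemma wj_pos j : 1 <= wj j.
Proof. unfold wj. apply (le_INR 1). pose proof (Nat.pow_nonzero (j+1) 2 ltac:(lia)).
  pose proof (Nat.pow_nonzero 2 (j+2) ltac:(lia)). nia. Qed.

Lemma wj_mono i j : (i <= j)%nat -> wj i <= wj j.
Proof. intros H. unfold wj. apply le_INR. apply Nat.mul_le_mono.
  - apply Nat.pow_le_mono_l; lia.
  - apply Nat.pow_le_mono_r; lia. Qed.

Lemma Kj_mono i j : (i <= j)%nat -> (Kj i <= Kj j)%nat.
Proof. intros H. unfold Kj. apply Nat.pow_le_mono_r; lia. Qed.

Lemma Ftot_mono T i j : (i <= j)%nat -> Ftot T i <= Ftot T j.
Proof.
  intros H. unfold Ftot. apply Rplus_le_compat_l.
  pose proof (wj_mono i j H). pose proof (wj_pos i).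
  assert (INR (Kj i) <= INR (Kj j)) by (apply le_INR, Kj_mono; auto).
  assert (INR (i + 1) <= INR (j + 1)) by (apply le_INR; lia).
  pose proof (pos_INR (Kj i)). pose proof (pos_INR (i+1)).
  apply Rmult_le_compat; try nra.
Qed.

Lemma err_triv x c s N : 0 <= c <= 1 -> Rabs (cntR x c s N - INR N * c) <= INR N.
Proof. intros Hc. pose proof (cntR_bounds x c s N). pose proof (pos_INR N).
  apply Rabs_le. split; nra. Qed.

Lemma seg_good d alpha j c s L : (1 <= d)%nat -> good d alpha j -> 0 <= c <= 1 ->
  (Bk j <= S s)%nat -> (s + L < Bk (S j))%nat ->
  Rabs (cntR (xs d alpha) c s L - INR L * c) <= 4 * wj j * INR (Kj j).
Proof.
  intros Hd Hg Hc H1 H2.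
  set (beta := INR (tk d j) * alpha).
  rewrite (cntR_ext _ (kx beta 0)).
  2:{ intros r Hr. unfold xs, kx, seqa.
      assert (blk (s + r) = j).
      { pose proof (blk_spec (s + r) ltac:(lia)) as [A B].
        destruct (Nat.lt_total (blk (s + r)) j) as [Hl|[He|Hl]]; auto.
        - pose proof (Bk_mono (S (blk (s+r))) j ltac:(lia)). lia.
        - pose proof (Bk_mono (S j) (blk (s+r)) ltac:(lia)). lia. }
      rewrite H, mult_INR. unfold beta. f_equal. ring. }
  rewrite cntR_shift.
  apply (kron beta (wj j) c (Bk (S j))).
  - pose proof (wj_pos j); lra.
  - intros q Hq z. apply Hg. auto.
  - exact Hc.
  - unfold Kj, Bk. unfold Bk in H2. eapply Nat.lt_le_trans with (2 ^ (2 ^ S j - 1))%nat; [lia|].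
    apply Nat.pow_le_mono_r; [lia|]. replace (j + 1)%nat with (S j) by lia. lia.
  - lia.
Qed.

Lemma total_err d alpha T c : (1 <= d)%nat -> (forall j, (T <= j)%nat -> good d alpha j) -> 0 <= c <= 1 ->
  forall J N, (N < Bk (S J))%nat -> Rabs (cntR (xs d alpha) c 0 N - INR N * c) <= Ftot T J.
Proof.
  intros Hd Hg Hc J. induction J as [|J IH]; intros N HN.
  - eapply Rle_trans; [apply err_triv; auto|].
    unfold Ftot. assert (INR N <= INR (Bk T)) by (apply le_INR; pose proof (Bk_pos T);
      unfold Bk in HN; simpl in HN; lia).
    pose proof (wj_pos 0). pose proof (pos_INR (Kj 0)). pose proof (pos_INR (0 + 1)).
    assert (0 <= 4 * wj 0 * INR (Kj 0) * INR (0 + 1)) by (repeat apply Rmult_le_pos; lra). lra.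
  - assert (HF0 : INR (Bk T) <= Ftot T (S J)).
    { unfold Ftot. pose proof (wj_pos (S J)). pose proof (pos_INR (Kj (S J))). pose proof (pos_INR (S J + 1)).
      assert (0 <= 4 * wj (S J) * INR (Kj (S J)) * INR (S J + 1)) by (repeat apply Rmult_le_pos; lra). lra. }
    destruct (Nat.lt_ge_cases N (Bk T)) as [HT|HT].
    { eapply Rle_trans; [apply err_triv; auto|]. apply lt_INR in HT. lra. }
    destruct (Nat.lt_ge_cases N (Bk (S J))) as [HJ|HJ].
    { eapply Rle_trans; [apply IH; auto|]. apply Ftot_mono. lia. }
    assert (HTJ : (T <= S J)%nat).
    { destruct (Nat.le_gt_cases T (S J)); auto. pose proof (Bk_mono (S (S J)) T ltac:(lia)). lia. }
    pose proof (Bk_pos (S J)).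
    replace N with ((Bk (S J) - 1) + (N - (Bk (S J) - 1)))%nat by lia.
    rewrite cntR_add, plus_INR.
    replace (cntR (xs d alpha) c 0 (Bk (S J) - 1) + cntR (xs d alpha) c (0 + (Bk (S J) - 1)) (N - (Bk (S J) - 1)) -
             (INR (Bk (S J) - 1) + INR (N - (Bk (S J) - 1))) * c)
      with ((cntR (xs d alpha) c 0 (Bk (S J) - 1) - INR (Bk (S J) - 1) * c) +
            (cntR (xs d alpha) c (0 + (Bk (S J) - 1)) (N - (Bk (S J) - 1)) - INR (N - (Bk (S J) - 1)) * c)) by ring.
    eapply Rle_trans; [apply Rabs_triang|].
    pose proof (IH (Bk (S J) - 1)%nat ltac:(lia)) as E1.
    pose proof (seg_good d alpha (S J) c (0 + (Bk (S J) - 1)) (N - (Bk (S J) - 1)) Hd (Hg _ HTJ) Hc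
                 ltac:(lia) ltac:(lia)) as E2.
    unfold Ftot in *.
    assert (wj J <= wj (S J)) by (apply wj_mono; lia).
    assert (INR (Kj J) <= INR (Kj (S J))) by (apply le_INR, Kj_mono; lia).
    assert (INR (S J + 1) = INR (J + 1) + 1) by (rewrite !plus_INR, S_INR; ring).
    pose proof (wj_pos J). pose proof (pos_INR (Kj J)). pose proof (pos_INR (J + 1)).
    assert (4 * wj J * INR (Kj J) * INR (J + 1) <= 4 * wj (S J) * INR (Kj (S J)) * INR (J + 1)).
    { apply Rmult_le_compat_r; [lra|]. apply Rmult_le_compat; nra. }
    nra.
Qed.

Lemma poly_bound z : 0 <= z -> (z + 2) ^ 3 <= 64 + 8 * z ^ 4.
Proof.
  intros Hz. destruct (Rle_lt_dec z 2).
  - assert ((z+2)^3 <= 4^3). { apply pow_incr. lra. } pose proof (pow_le z 4 Hz). simpl in *. lra.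
  - assert ((z+2)^3 <= (2*z)^3) by (apply pow_incr; lra).
    assert (z^3 <= z^4) by (simpl; nra). simpl in *. nra.
Qed.

Lemma exp_quart x : 0 <= x -> (x / 4) ^ 4 <= exp x.
Proof.
  intros Hx. replace (exp x) with (exp (x/4) ^ 4).
  2:{ simpl. rewrite Rmult_1_r, <- !exp_plus. f_equal. field. }
  apply pow_incr. split; [lra|]. pose proof (exp_ineq1_le (x/4)). lra.
Qed.

Lemma poly_exp a z : 0 < a -> 0 <= z -> (z + 2) ^ 3 <= (64 + 8 * (4 / a) ^ 4) * exp (a * z).
Proof.
  intros Ha Hz. pose proof (poly_bound z Hz).
  pose proof (exp_quart (a * z) ltac:(nra)).
  assert (E1 : 1 <= exp (a * z)) by (pose proof (exp_ineq1_le (a*z)); nra).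
  assert (E2 : z ^ 4 = (4 / a) ^ 4 * ((a * z) / 4) ^ 4) by (field; lra).
  assert (0 <= (4 / a) ^ 4) by (apply pow_le; unfold Rdiv; apply Rmult_le_pos; [lra|left; apply Rinv_0_lt_compat; lra]).
  assert ((4/a)^4 * ((a*z)/4)^4 <= (4/a)^4 * exp (a*z)) by (apply Rmult_le_compat_l; auto).
  nra.
Qed.

Lemma ln2_pos : 0 < ln 2.
Proof. rewrite <- ln_1. apply ln_increasing; lra. Qed.

Lemma ln_le x y : 0 < x -> x <= y -> ln x <= ln y.
Proof. intros Hx [H|H]; [left; apply ln_increasing; auto| subst; lra]. Qed.

Lemma Rpower_pos x y : 0 < Rpower x y.
Proof. unfold Rpower. apply exp_pos. Qed.

Lemma Rpower_2eps y eps : 0 < y -> Rpower y (2 + eps) = y ^ 2 * Rpower y eps.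
Proof. intros Hy. rewrite Rpower_plus. rewrite <- Rpower_pow by auto. simpl (INR 2).
  replace (1 + 1) with 2 by ring. reflexivity. Qed.

Lemma Ftot_form T z : Ftot T (S z) = INR (Bk T) + 128 * (INR z + 2) ^ 3 * (2 ^ z) ^ 2.
Proof.
  unfold Ftot, wj, Kj. rewrite !mult_INR, !pow_INR, !plus_INR, !S_INR.
  replace (S z + 2)%nat with (z + 3)%nat by lia. replace (S z + 1)%nat with (z + 2)%nat by lia.
  rewrite !pow_add. simpl (INR 2). simpl (INR 1). simpl (INR 0). replace (0 + 1 + 1) with 2 by ring. ring.
Qed.

Lemma asymp T eps : 0 < eps -> exists C, forall N, (2 <= N)%nat ->
  2 * Ftot T (blk N) <= C * Rpower (ln (INR N)) (2 + eps).
Proof.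
  intros He.
  pose proof ln2_pos as Hl2.
  set (a := eps * ln 2).
  set (C2 := 64 + 8 * (4 / a) ^ 4).
  set (r1 := Rpower (ln 2) (2 + eps)). set (r2 := Rpower (ln 2) eps).
  assert (Hr1 : 0 < r1) by apply Rpower_pos. assert (Hr2 : 0 < r2) by apply Rpower_pos.
  exists (2 * (INR (Bk T) / r1 + 128 * C2 / (r2 * (ln 2) ^ 2))).
  intros N HN.
  destruct (blk_spec N ltac:(lia)) as [HB1 HB2].
  set (J := blk N) in *.
  destruct J as [|z] eqn:EJ.
  { unfold Bk in HB2. simpl in HB2. lia. }
  rewrite Ftot_form.
  set (y := ln (INR N)).
  set (P := 2 ^ z).
  assert (HP : 1 <= P) by (unfold P; clear; induction z; simpl; lra).
  assert (HNr : 2 <= INR N) by (apply (le_INR 2); lia).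
  assert (Hy2 : ln 2 <= y) by (apply ln_le; lra).
  assert (HyP : P * ln 2 <= y).
  { unfold y. apply Rle_trans with (ln (INR (Bk (S z)))).
    - unfold Bk. rewrite pow_INR, ln_pow by (simpl; lra). simpl (INR 2). replace (1 + 1) with 2 by ring.
      apply Rmult_le_compat_r; [lra|]. unfold P. replace 2 with (INR 2) at 1 by (simpl; ring). rewrite <- pow_INR. apply le_INR.
      rewrite Nat.pow_succ_r'. pose proof (Nat.pow_nonzero 2 z ltac:(lia)). lia.
    - apply ln_le; [apply lt_0_INR; pose proof (Bk_pos (S z)); lia|]. apply le_INR. exact HB1. }
  assert (HRP : Rpower P eps = exp (a * INR z)).
  { unfold Rpower, P, a. rewrite ln_pow by lra. f_equal. ring. }
  assert (Hpoly := poly_exp a (INR z) ltac:(unfold a; nra) (pos_INR z)). fold C2 in Hpoly.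
  rewrite <- HRP in Hpoly.
  assert (HRy : Rpower P eps * r2 <= Rpower y eps).
  { unfold r2. rewrite Rpower_mult_distr by lra. apply Rle_Rpower_l; [lra|]. split; [nra|lra]. }
  assert (Hy2' : (P * ln 2) ^ 2 <= y ^ 2) by (apply pow_incr; nra).
  assert (HRyy : r1 <= Rpower y (2 + eps)).
  { unfold r1. apply Rle_Rpower_l; lra. }
  assert (HC2 : 0 < C2).
  { unfold C2. assert (0 <= (4/a)^4) by (apply pow_le; unfold Rdiv; apply Rmult_le_pos; [lra|left; apply Rinv_0_lt_compat; unfold a; nra]). lra. }
  rewrite Rpower_2eps in HRyy |- * by lra.
  set (Ry := Rpower y eps) in *. set (RP := Rpower P eps) in *.
  assert (0 < RP) by apply Rpower_pos.
  pose proof (pos_INR (Bk T)).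
  assert (A1 : INR (Bk T) <= INR (Bk T) / r1 * (y ^ 2 * Ry)).
  { unfold Rdiv. rewrite Rmult_assoc. rewrite <- (Rmult_1_r (INR (Bk T))) at 1.
    apply Rmult_le_compat_l; [lra|]. apply (Rmult_le_reg_l r1); [lra|].
    rewrite <- Rmult_assoc, Rinv_r, Rmult_1_l, Rmult_1_r by lra. lra. }
  assert (A2 : 128 * (INR z + 2) ^ 3 * P ^ 2 <= 128 * C2 / (r2 * ln 2 ^ 2) * (y ^ 2 * Ry)).
  { assert (B1 : (INR z + 2) ^ 3 * P ^ 2 <= C2 * RP * P ^ 2).
    { apply Rmult_le_compat_r; [apply pow_le; lra| exact Hpoly]. }
    assert (B2 : C2 * RP * P ^ 2 * (r2 * ln 2 ^ 2) <= C2 * (y ^ 2 * Ry)).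
    { replace (C2 * RP * P ^ 2 * (r2 * ln 2 ^ 2)) with (C2 * ((P * ln 2) ^ 2 * (RP * r2))) by ring.
      apply Rmult_le_compat_l; [lra|]. apply Rmult_le_compat; try lra.
      apply pow_le; nra. nra. }
    assert (0 < r2 * ln 2 ^ 2) by (apply Rmult_lt_0_compat; [lra|apply pow_lt; lra]).
    unfold Rdiv. replace (128 * C2 * / (r2 * ln 2 ^ 2) * (y ^ 2 * Ry)) with
      (128 * (C2 * (y ^ 2 * Ry) / (r2 * ln 2 ^ 2))) by (field; lra).
    rewrite Rmult_assoc. apply Rmult_le_compat_l; [lra|].
    apply (Rmult_le_reg_r (r2 * ln 2 ^ 2)); [lra|].
    replace (C2 * (y ^ 2 * Ry) / (r2 * ln 2 ^ 2) * (r2 * ln 2 ^ 2)) with (C2 * (y^2*Ry)) by (field; lra). nra. }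
  nra.
Qed.

Lemma disc_bound x N E : (1 <= N)%nat ->
  (forall c, 0 <= c <= 1 -> Rabs (cntR x c 0 N - INR N * c) <= E) ->
  INR N * discrepancy x N <= 2 * E.
Proof.
  intros HN HE.
  assert (HNr : 1 <= INR N) by (apply (le_INR 1); lia).
  unfold discrepancy. destruct (completeness _ _ _) as [D [Hub Hlub]]. simpl.
  assert (D <= 2 * E / INR N).
  { apply Hlub. intros v [a [b [Hab [Hb ->]]]].
    rewrite count_in_cntR by lra.
    pose proof (HE a ltac:(lra)). pose proof (HE b ltac:(lra)).
    replace ((cntR x b 0 N - cntR x a 0 N) / INR N - (b - a)) with
      (((cntR x b 0 N - INR N * b) - (cntR x a 0 N - INR N * a)) / INR N) by (field; lra).
    unfold Rdiv. rewrite Rabs_mult, (Rabs_right (/ INR N)) by (apply Rle_ge; left; apply Rinv_0_lt_compat; lra).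
    apply Rmult_le_compat_r; [left; apply Rinv_0_lt_compat; lra|].
    eapply Rle_trans; [apply Rabs_triang|]. rewrite Rabs_Ropp. lra. }
  apply (Rmult_le_compat_l (INR N)) in H; [|lra].
  replace (INR N * (2 * E / INR N)) with (2 * E) in H by (field; lra). exact H.
Qed.

Definition cov (A : R -> Prop) (W : R) : Prop :=
  exists l u : nat -> R,
    (forall k, l k <= u k) /\
    (forall y, A y -> exists k, l k <= y <= u k) /\
    (forall n, sum_f_R0 (fun k => u k - l k) n <= W).

Lemma choice_fun {A B : Type} (P : A -> B -> Prop) : (forall a, exists b, P a b) -> exists f, forall a, P a (f a).
Proof. intros H. exists (fun a => proj1_sig (constructive_indefinite_description _ (H a))).
  intros a. exact (proj2_sig (constructive_indefinite_description _ (H a))). Qed.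

Definition lsum {A : Type} (h : A -> R) (l : list A) : R := fold_right (fun x acc => h x + acc) 0 l.

Lemma lsum_app {A} (h : A -> R) l1 l2 : lsum h (l1 ++ l2) = lsum h l1 + lsum h l2.
Proof. induction l1; simpl; [lra|]. rewrite IHl1; lra. Qed.

Lemma lsum_perm {A} (h : A -> R) l1 l2 : Permutation l1 l2 -> lsum h l1 = lsum h l2.
Proof. induction 1; simpl; lra. Qed.

Lemma lsum_nonneg {A} (h : A -> R) l : (forall x, 0 <= h x) -> 0 <= lsum h l.
Proof. intros H. induction l; simpl; [lra|]. pose proof (H a). lra. Qed.

Lemma lsum_sub {A} (h : A -> R) (l l' : list A) : (forall x, 0 <= h x) ->
  NoDup l -> incl l l' -> lsum h l <= lsum h l'.
Proof.
  intros Hh. revert l'. induction l as [|a l IH]; intros l' Hnd Hinc.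
  - simpl. apply lsum_nonneg; auto.
  - inversion Hnd; subst.
    assert (Ha : In a l') by (apply Hinc; left; auto).
    apply in_split in Ha. destruct Ha as [l1 [l2 ->]].
    rewrite (lsum_perm h (l1 ++ a :: l2) (a :: l1 ++ l2)) by (symmetry; apply Permutation_middle).
    simpl. apply Rplus_le_compat_l. apply IH; auto.
    intros x Hx. assert (In x (l1 ++ a :: l2)) by (apply Hinc; right; auto).
    apply in_app_or in H. apply in_or_app. destruct H as [H|[H|H]]; auto. subst. contradiction.
Qed.

Lemma sum_f_lsum f n : sum_f_R0 f n = lsum f (seq 0 (S n)).
Proof. induction n; [simpl; lra|].
  change (sum_f_R0 f (S n)) with (sum_f_R0 f n + f (S n)).
  rewrite IHn, (seq_S (S n) 0), lsum_app. simpl (0 + S n)%nat. unfold lsum at 3. simpl fold_right. lra. Qed.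

Lemma lsum_map {A B} (h : B -> R) (g : A -> B) l : lsum h (map g l) = lsum (fun x => h (g x)) l.
Proof. induction l; simpl; [lra|]. rewrite IHl; lra. Qed.

Lemma lsum_prod (g : nat -> nat -> R) l1 l2 :
  lsum (fun p => g (fst p) (snd p)) (list_prod l1 l2) = lsum (fun i => lsum (g i) l2) l1.
Proof.
  induction l1; simpl; [lra|]. rewrite lsum_app, IHl1, lsum_map. simpl. reflexivity.
Qed.

Lemma lsum_le {A} (h g : A -> R) l : (forall x, In x l -> h x <= g x) -> lsum h l <= lsum g l.
Proof. induction l; simpl; intros H; [lra|]. pose proof (H a (or_introl eq_refl)).
  pose proof (IHl (fun x Hx => H x (or_intror Hx))). lra. Qed.

Lemma of_nat_bound k : (fst (of_nat k) <= k /\ snd (of_nat k) <= k)%nat.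
Proof. destruct (of_nat k) as [x y] eqn:E. pose proof (to_nat_non_decreasing x y).
  rewrite <- E, cancel_to_of in H. simpl. lia. Qed.

Lemma cov_union (A : nat -> R -> Prop) (w : nat -> R) (W : R) :
  (forall i, cov (A i) (w i)) -> (forall n, sum_f_R0 w n <= W) ->
  cov (fun y => exists i, A i y) W.
Proof.
  intros HA HW.
  destruct (choice_fun (fun i lu => (forall k, fst lu k <= snd lu k) /\
             (forall y, A i y -> exists k, fst lu k <= y <= snd lu k) /\
             (forall n, sum_f_R0 (fun k => snd lu k - fst lu k) n <= w i))) as [F HF].
  { intros i. destruct (HA i) as [l [u H]]. exists (l, u). exact H. }
  set (L := fun i => fst (F i)). set (U := fun i => snd (F i)).
  set (g := fun i n => U i n - L i n).
  assert (Hg : forall i n, 0 <= g i n) by (intros; unfold g, L, U; pose proof (proj1 (HF i) n); lra).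
  exists (fun k => L (fst (of_nat k)) (snd (of_nat k))), (fun k => U (fst (of_nat k)) (snd (of_nat k))).
  split; [|split].
  - intros k. pose proof (Hg (fst (of_nat k)) (snd (of_nat k))). unfold g in H. lra.
  - intros y [i Hy]. destruct (proj1 (proj2 (HF i)) y Hy) as [n Hn].
    exists (to_nat (i, n)). rewrite cancel_of_to. simpl. exact Hn.
  - intros K. rewrite sum_f_lsum.
    rewrite <- (lsum_map (fun p => g (fst p) (snd p)) of_nat).
    eapply Rle_trans.
    + apply (lsum_sub _ _ (list_prod (seq 0 (S K)) (seq 0 (S K)))).
      * intros [x y]; apply Hg.
      * apply FinFun.Injective_map_NoDup; [|apply seq_NoDup].
        intros a b Hab. rewrite <- (cancel_to_of a), <- (cancel_to_of b), Hab. reflexivity.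
      * intros p Hp. apply in_map_iff in Hp. destruct Hp as [k [<- Hk]].
        apply in_seq in Hk. pose proof (of_nat_bound k).
        destruct (of_nat k) as [x y]. apply in_prod; apply in_seq; simpl in *; lia.
    + rewrite lsum_prod. eapply Rle_trans; [|apply (HW K)].
      rewrite sum_f_lsum. apply lsum_le. intros i _.
      pose proof (proj2 (proj2 (HF i)) K). rewrite sum_f_lsum in H. exact H.
Qed.

Lemma cov_mono (A B : R -> Prop) W W' : (forall y, A y -> B y) -> W <= W' -> cov B W -> cov A W'.
Proof.
  intros HAB HW [l [u [H1 [H2 H3]]]]. exists l, u. split; [|split]; auto.
  intros n. specialize (H3 n). lra.
Qed.

Lemma cov_interval a b : a <= b -> cov (fun y => a <= y <= b) (b - a).
Proof.
  intros Hab. exists (fun k => match k with O => a | _ => 0 end), (fun k => match k with O => b | _ => 0 end).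
  split; [|split].
  - intros [|k]; lra.
  - intros y Hy. exists O. exact Hy.
  - intros n. induction n; simpl; [lra|]. lra.
Qed.

Lemma cov_empty : cov (fun _ => False) 0.
Proof.
  exists (fun _ => 0), (fun _ => 0). split; [|split].
  - intros; lra.
  - intros y [].
  - intros n. induction n; simpl; lra.
Qed.

Lemma null_of_cov (S : R -> Prop) : (forall eps, 0 < eps -> cov S eps) -> null_set S.
Proof. intros H eps He. destruct (H eps He) as [l [u H']]. exists l, u. exact H'. Qed.

Lemma fin_sum (w : nat -> R) M c : (forall k, 0 <= w k) -> (forall k, (M < k)%nat -> w k = 0) ->
  (forall k, w k <= c) -> forall n, sum_f_R0 w n <= INR (S M) * c.
Proof.
  intros H0 H1 H2.
  assert (Hc : 0 <= c) by (pose proof (H0 O); pose proof (H2 O); lra).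
  assert (forall n, sum_f_R0 w n <= INR (S (Nat.min n M)) * c).
  { induction n.
    - simpl. pose proof (H2 O). lra.
    - change (sum_f_R0 w (S n)) with (sum_f_R0 w n + w (S n)).
      destruct (le_lt_dec (S n) M).
      + replace (Nat.min (S n) M) with (S n) by lia. replace (Nat.min n M) with n in IHn by lia.
        rewrite !S_INR in *. pose proof (H2 (S n)). nra.
      + rewrite H1 by lia. replace (Nat.min (S n) M) with M by lia.
        replace (Nat.min n M) with M in IHn by lia. lra. }
  intros n. eapply Rle_trans; [apply H|]. apply Rmult_le_compat_r; auto. apply le_INR. lia.
Qed.

Lemma cov_bad (m : Z) (Mn : nat) (eta : R) : (1 <= Mn)%nat -> 0 < eta <= 1 ->
  cov (fun y => IZR m <= y <= IZR m + 1 /\ exists z : Z, Rabs (INR Mn * y - IZR z) < eta) (4 * eta).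
Proof.
  intros HM He.
  assert (HMr : 1 <= INR Mn) by (apply (le_INR 1); lia).
  set (ctr := fun k : nat => (INR Mn * IZR m + INR k) / INR Mn).
  set (A := fun k y => (k <= Mn)%nat /\ ctr k - eta / INR Mn <= y <= ctr k + eta / INR Mn).
  set (w := fun k => if le_dec k Mn then 2 * eta / INR Mn else 0).
  apply (cov_mono _ (fun y => exists k, A k y) (INR (S Mn) * (2 * eta / INR Mn)) _).
  - intros y [[Hy1 Hy2] [z Hz]]. apply Rabs_def2 in Hz.
    assert (Hz1 : (Z.of_nat Mn * m - 1 < z)%Z).
    { apply lt_IZR. rewrite minus_IZR, mult_IZR, <- INR_IZR_INZ. simpl. nra. }
    assert (Hz2 : (z < Z.of_nat Mn * m + Z.of_nat Mn + 1)%Z).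
    { apply lt_IZR. rewrite !plus_IZR, mult_IZR, <- INR_IZR_INZ. simpl. nra. }
    exists (Z.to_nat (z - Z.of_nat Mn * m)). unfold A. split; [lia|].
    assert (Ec : ctr (Z.to_nat (z - Z.of_nat Mn * m)) = IZR z / INR Mn).
    { unfold ctr. rewrite (INR_IZR_INZ (Z.to_nat _)), Z2Nat.id by lia. rewrite minus_IZR, mult_IZR, <- INR_IZR_INZ.
      f_equal. ring. }
    rewrite Ec. split.
    + apply (Rmult_le_reg_l (INR Mn)); [lra|].
      replace (INR Mn * (IZR z / INR Mn - eta / INR Mn)) with (IZR z - eta) by (field; lra). lra.
    + apply (Rmult_le_reg_l (INR Mn)); [lra|].
      replace (INR Mn * (IZR z / INR Mn + eta / INR Mn)) with (IZR z + eta) by (field; lra). lra.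
  - rewrite S_INR. apply (Rmult_le_reg_l (INR Mn)); [lra|].
    replace (INR Mn * ((INR Mn + 1) * (2 * eta / INR Mn))) with ((INR Mn + 1) * (2 * eta)) by (field; lra).
    nra.
  - apply (cov_union A w).
    + intros k. unfold A, w. destruct (le_dec k Mn) as [Hk|Hk].
      * eapply cov_mono; [| |apply (cov_interval (ctr k - eta / INR Mn) (ctr k + eta / INR Mn))].
        -- intros y [_ Hy]. exact Hy.
        -- right. field. lra.
        -- assert (0 < eta / INR Mn) by (apply Rdiv_lt_0_compat; lra). lra.
      * eapply cov_mono; [| |apply cov_empty]. intros y [Hk' _]. contradiction. lra.
    + apply fin_sum.
      * intros k; unfold w; destruct le_dec; [|lra]. apply Rlt_le, Rdiv_lt_0_compat; lra.
      * intros k Hk; unfold w; destruct le_dec; [lia|lra].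
      * intros k; unfold w; destruct le_dec; [lra|]. apply Rlt_le, Rdiv_lt_0_compat; lra.
Qed.

Lemma sum_scal_l c f n : sum_f_R0 (fun i => c * f i) n = c * sum_f_R0 f n.
Proof. induction n; simpl; [lra|]. rewrite IHn. ring. Qed.

Lemma recip_ln q : (2 <= q)%nat -> 1 / INR q <= ln (INR q) - ln (INR (q - 1)).
Proof.
  intros Hq.
  assert (Hqr : 2 <= INR q) by (apply (le_INR 2); lia).
  rewrite minus_INR by lia. simpl (INR 1).
  assert (H1 : 1 - 1 / INR q <= exp (- (1 / INR q))) by (pose proof (exp_ineq1_le (- (1 / INR q))); lra).
  assert (H2 : ln (1 - 1 / INR q) <= - (1 / INR q)).
  { rewrite <- (ln_exp (- (1 / INR q))). apply ln_le; auto.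
    apply (Rmult_lt_reg_l (INR q)); [lra|]. field_simplify; lra. }
  replace (1 - 1 / INR q) with ((INR q - 1) / INR q) in H2 by (field; lra).
  unfold Rdiv in H2. rewrite ln_mult, ln_Rinv in H2 by (try apply Rinv_0_lt_compat; lra). lra.
Qed.

Definition hw (B q : nat) : R := if le_dec 1 q then if le_dec q B then 1 / INR q else 0 else 0.

Lemma harm B : (1 <= B)%nat -> forall n, sum_f_R0 (hw B) n <= 1 + ln (INR B).
Proof.
  intros HB.
  assert (forall n, sum_f_R0 (hw B) n <= 1 + ln (INR (Nat.max 1 (Nat.min n B)))).
  { induction n.
    - simpl. unfold hw. destruct le_dec; [lia|]. rewrite ln_1. lra.
    - change (sum_f_R0 (hw B) (S n)) with (sum_f_R0 (hw B) n + hw B (S n)).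
      unfold hw at 2. destruct (le_dec 1 (S n)); [|lia].
      destruct (le_dec (S n) B).
      + destruct (Nat.eq_dec n 0) as [->|Hn0].
        * replace (Nat.max 1 (Nat.min 1 B)) with 1%nat by lia. simpl INR. rewrite ln_1. simpl sum_f_R0. unfold hw. destruct (le_dec 1 0); [lia|]. lra.
        * replace (Nat.max 1 (Nat.min n B)) with n in IHn by lia.
          replace (Nat.max 1 (Nat.min (S n) B)) with (S n) by lia.
          pose proof (recip_ln (S n) ltac:(lia)). replace (S n - 1)%nat with n in H by lia. lra.
      + replace (Nat.max 1 (Nat.min (S n) B)) with B by lia.
        replace (Nat.max 1 (Nat.min n B)) with B in IHn by lia. lra. }
  intros n. eapply Rle_trans; [apply H|]. apply Rplus_le_compat_l. apply ln_le.
  - apply lt_0_INR. lia.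
  - apply le_INR. lia.
Qed.

Lemma ln2_le1 : ln 2 <= 1.
Proof. rewrite <- (ln_exp 1). apply ln_le; [lra|]. pose proof (exp_ineq1_le 1). lra. Qed.

Definition Sset (d : nat) (y : R) : Prop := forall T, exists j, (T <= j)%nat /\ ~ good d y j.

Lemma cov_level d (m : Z) j : (1 <= d)%nat ->
  cov (fun y => IZR m <= y <= IZR m + 1 /\ ~ good d y j) (2 / INR ((j + 1) ^ 2)).
Proof.
  intros Hd.
  set (B := Bk (S j)). set (t := tk d j).
  assert (HB : (1 <= B)%nat) by apply Bk_pos.
  assert (Ht : (1 <= t)%nat) by apply tk_pos.
  assert (Hw := wj_pos j).
  set (A := fun q y => (1 <= q <= B)%nat /\ IZR m <= y <= IZR m + 1 /\
                        exists z : Z, Rabs (INR (q * t) * y - IZR z) < 1 / (INR q * wj j)).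
  apply (cov_mono _ (fun y => exists q, A q y) (4 / wj j * (1 + ln (INR B))) _).
  - intros y [Hy Hng]. unfold good in Hng.
    apply not_all_ex_not in Hng. destruct Hng as [q Hq].
    apply imply_to_and in Hq. destruct Hq as [Hq Hq'].
    apply not_all_ex_not in Hq'. destruct Hq' as [z Hz].
    exists q. unfold A. split; [exact Hq|]. split; [exact Hy|]. exists z.
    rewrite mult_INR. rewrite Rmult_assoc. apply Rnot_ge_lt. exact Hz.
  - assert (HlnB : ln (INR B) <= INR (2 ^ S j) - 1).
    { unfold B, Bk. rewrite pow_INR, ln_pow by (simpl; lra). simpl (INR 2).
      replace (1 + 1) with 2 by ring. rewrite minus_INR by (pose proof (Nat.pow_nonzero 2 (S j)); lia).
      pose proof ln2_le1. pose proof ln2_pos.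
      assert (1 <= INR (2 ^ S j)) by (apply (le_INR 1); pose proof (Nat.pow_nonzero 2 (S j)); lia).
      simpl (INR 1). nra. }
    unfold wj. rewrite mult_INR, !pow_INR. rewrite pow_INR in HlnB.
    replace (j + 2)%nat with (S (S j)) by lia. replace (j + 1)%nat with (S j) by lia.
    simpl (INR 2) in *. replace (1 + 1) with 2 in * by ring.
    assert (0 < INR (S j) ^ 2) by (apply pow_lt; apply lt_0_INR; lia).
    assert (0 < 2 ^ S j) by (apply pow_lt; lra).
    change (2 ^ S (S j)) with (2 * 2 ^ S j).
    apply (Rmult_le_reg_r (INR (S j) ^ 2 * (2 * 2 ^ S j))); [nra|].
    field_simplify; nra.
  - apply (cov_union A (fun q => 4 / wj j * hw B q)).
    + intros q. unfold hw.
      destruct (le_dec 1 q) as [H1|H1]; [destruct (le_dec q B) as [H2|H2]|].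
      * eapply cov_mono; [| |apply (cov_bad m (q * t) (1 / (INR q * wj j)))].
        -- intros y [_ [Hy Hz]]. split; auto.
        -- right. field. repeat split; try lra; apply not_0_INR; lia.
        -- nia.
        -- assert (1 <= INR q) by (apply (le_INR 1); lia). split.
           ++ apply Rdiv_lt_0_compat; nra.
           ++ apply (Rmult_le_reg_l (INR q * wj j)); [nra|]. field_simplify; nra.
      * eapply cov_mono; [| |apply cov_empty]. intros y [Hq _]. lia. lra.
      * eapply cov_mono; [| |apply cov_empty]. intros y [Hq _]. lia. lra.
    + intros n. rewrite sum_scal_l.
      apply Rmult_le_compat_l; [apply Rlt_le, Rdiv_lt_0_compat; lra|]. apply harm. exact HB.
Qed.

Lemma sq_tel n : 1 / INR ((S n + 1) ^ 2) <= 1 / INR (n + 1) - 1 / INR (S n + 1).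
Proof.
  rewrite pow_INR, !plus_INR, S_INR. simpl (INR 1).
  assert (0 <= INR n) by apply pos_INR.
  apply (Rmult_le_reg_r ((INR n + 1) * (INR n + 1 + 1) ^ 2)).
  { apply Rmult_lt_0_compat; [lra|]. apply pow_lt; lra. }
  field_simplify; try lra. all: try nra.
Qed.

Lemma tail_sum T : (1 <= T)%nat -> forall n,
  sum_f_R0 (fun j => if le_dec T j then 1 / INR ((j + 1) ^ 2) else 0) n <=
  (if le_dec T n then 1 / INR T - 1 / INR (n + 1) else 0).
Proof.
  intros HT n. induction n.
  - simpl. destruct le_dec; [lia|]. lra.
  - change (sum_f_R0 (fun j => if le_dec T j then 1 / INR ((j + 1) ^ 2) else 0) (S n))
      with (sum_f_R0 (fun j => if le_dec T j then 1 / INR ((j + 1) ^ 2) else 0) n +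
            (if le_dec T (S n) then 1 / INR ((S n + 1) ^ 2) else 0)).
    pose proof (sq_tel n).
    destruct (le_dec T (S n)); destruct (le_dec T n) in IHn.
    + lra.
    + replace (INR T) with (INR (S n)) by (f_equal; lia). rewrite (Nat.add_1_r n) in H. lra.
    + lia.
    + lra.
Qed.

Lemma exists_nat_gt x : exists n : nat, x < INR n.
Proof.
  destruct (archimed x) as [H _]. exists (Z.to_nat (up x)).
  destruct (Z_lt_le_dec (up x) 0).
  - replace (Z.to_nat (up x)) with 0%nat by lia. simpl. apply IZR_lt in l. lra.
  - rewrite INR_IZR_INZ, Z2Nat.id by lia. lra.
Qed.

Lemma cov_m d (m : Z) delta : (1 <= d)%nat -> 0 < delta ->
  cov (fun y => IZR m <= y <= IZR m + 1 /\ Sset d y) delta.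
Proof.
  intros Hd Hdel.
  destruct (exists_nat_gt (2 / delta)) as [T0 HT0].
  set (T := S T0).
  assert (HTr : 2 / delta < INR T) by (unfold T; rewrite S_INR; lra).
  assert (HT1 : 1 <= INR T) by (apply (le_INR 1); unfold T; lia).
  set (A := fun j y => (T <= j)%nat /\ IZR m <= y <= IZR m + 1 /\ ~ good d y j).
  apply (cov_mono _ (fun y => exists j, A j y) (2 / INR T) _).
  - intros y [Hy HS]. destruct (HS T) as [j [Hj Hg]]. exists j. split; auto.
  - apply (Rmult_le_reg_r (INR T / delta)). { apply Rdiv_lt_0_compat; lra. }
    replace (2 / INR T * (INR T / delta)) with (2 / delta) by (field; lra).
    replace (delta * (INR T / delta)) with (INR T) by (field; lra). lra.
  - apply (cov_union A (fun j => 2 * (if le_dec T j then 1 / INR ((j + 1) ^ 2) else 0))).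
    + intros j. unfold A. destruct (le_dec T j).
      * eapply cov_mono; [| |apply (cov_level d m j Hd)].
        -- intros y [_ H]. exact H.
        -- right. field. apply not_0_INR. apply Nat.pow_nonzero. lia.
      * eapply cov_mono; [| |apply cov_empty]. intros y [H _]. contradiction. lra.
    + intros n. rewrite sum_scal_l. pose proof (tail_sum T ltac:(unfold T; lia) n).
      assert (0 < 1 / INR (n + 1)) by (apply Rdiv_lt_0_compat; [lra|]; apply lt_0_INR; lia).
      assert (0 < / INR T) by (apply Rinv_0_lt_compat; lra). destruct (le_dec T n); unfold Rdiv in *; lra.
Qed.

Lemma geo_sum eps n : sum_f_R0 (fun i => eps / 2 ^ (S i)) n = eps - eps / 2 ^ (S n).
Proof.
  induction n.
  - simpl. field.
  - change (sum_f_R0 (fun i => eps / 2 ^ (S i)) (S n)) with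
      (sum_f_R0 (fun i => eps / 2 ^ (S i)) n + eps / 2 ^ (S (S n))).
    rewrite IHn. simpl. field. apply pow_nonzero. lra.
Qed.

Lemma Sset_null d : (1 <= d)%nat -> null_set (Sset d).
Proof.
  intros Hd. apply null_of_cov. intros eps He.
  set (A := fun (i : nat) y => Sset d y /\ ((INR i <= y <= INR i + 1) \/ (- INR i - 1 <= y <= - INR i))).
  apply (cov_mono _ (fun y => exists i, A i y) eps _).
  - intros y HS. destruct (Rle_lt_dec 0 y) as [Hy|Hy].
    + pose proof (base_Int_part y) as [B1 B2].
      assert (Hk : (0 <= Int_part y)%Z).
      { assert (-1 < Int_part y)%Z; [|lia]. apply lt_IZR. simpl. lra. }
      exists (Z.to_nat (Int_part y)). unfold A. split; auto. left.
      rewrite INR_IZR_INZ, Z2Nat.id by lia. lra.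
    + pose proof (base_Int_part y) as [B1 B2].
      assert (Hk : (Int_part y < 0)%Z) by (apply lt_IZR; simpl; lra).
      exists (Z.to_nat (- Int_part y - 1)). unfold A. split; auto. right.
      rewrite INR_IZR_INZ, Z2Nat.id by lia. rewrite minus_IZR, opp_IZR. simpl. lra.
  - lra.
  - apply (cov_union A (fun i => eps / 2 ^ (S i))).
    + intros i.
      set (delta := eps / 2 ^ (S (S i))).
      assert (Hdel : 0 < delta) by (unfold delta; apply Rdiv_lt_0_compat; [lra|apply pow_lt; lra]).
      apply (cov_mono _ (fun y => exists k : nat, match k with
          | O => IZR (Z.of_nat i) <= y <= IZR (Z.of_nat i) + 1 /\ Sset d y
          | 1%nat => IZR (- Z.of_nat i - 1) <= y <= IZR (- Z.of_nat i - 1) + 1 /\ Sset d y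
          | _ => False end) (delta + delta) _).
      * intros y [HS [Hy|Hy]].
        -- exists O. rewrite <- INR_IZR_INZ. auto.
        -- exists 1%nat. rewrite minus_IZR, opp_IZR, <- INR_IZR_INZ. simpl. split; auto. lra.
      * unfold delta. simpl. right. field. apply pow_nonzero; lra.
      * apply (cov_union _ (fun k => match k with O => delta | 1%nat => delta | _ => 0 end)).
        -- intros [|[|k]].
           ++ apply cov_m; auto.
           ++ apply cov_m; auto.
           ++ apply cov_empty.
        -- intros [|[|n]]; simpl; try lra. clear. induction n; simpl in *; lra.
    + intros n. rewrite geo_sum. assert (0 < eps / 2 ^ S n) by (apply Rdiv_lt_0_compat; [lra|apply pow_lt; lra]). lra.
Qed.


Theorem theorem5 :
  forall d : nat, (1 <= d)%nat ->
  exists (a : nat -> nat) (c : R),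
    (forall n, (1 <= n)%nat -> (0 < a n)%nat) /\
    (forall n, (1 <= n)%nat -> (a n < a (S n))%nat) /\
    0 < c /\
    (forall n, (1 <= n)%nat ->
       INR (a (S n)) / INR (a n) > 1 + c / Rpower (INR (a n)) (1 / INR d)) /\
    exists S : R -> Prop, null_set S /\
      forall alpha : R, ~ S alpha ->
        forall eps : R, 0 < eps ->
          exists (C : R) (N0 : nat),
            forall N : nat, (N0 <= N)%nat ->
              INR N * discrepancy (fun n => frac_part (INR (a n) * alpha)) N
                <= C * Rpower (ln (INR N)) (2 + eps).
Proof.
  intros d Hd. exists (seqa d), (1 / 2).
  split; [|split; [|split; [|split]]].
  - intros n Hn. apply seqa_pos; auto.
  - intros n Hn. pose proof (seqa_step d n). pose proof (tk_pos d (blk n)). lia.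
  - lra.
  - intros n Hn. apply growth; auto.
  - exists (Sset d). split; [apply Sset_null; auto|].
    intros alpha HS eps He.
    assert (HT : exists T, forall j, (T <= j)%nat -> good d alpha j).
    { apply NNPP. intros Hno. apply HS. intros T. apply NNPP. intros Hno2. apply Hno.
      exists T. intros j Hj. apply NNPP. intros Hg. apply Hno2. exists j. auto. }
    destruct HT as [T HT].
    destruct (asymp T eps He) as [C HC].
    exists C, 2%nat. intros N HN.
    eapply Rle_trans; [|apply HC; auto].
    change (fun n => frac_part (INR (seqa d n) * alpha)) with (xs d alpha).
    apply disc_bound; [lia|].
    intros c Hc. apply (total_err d alpha T c Hd HT Hc (blk N) N).
    apply blk_spec. lia.
Qed.
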